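(* Let $\widehat Q_\sigma$ be a component of the multivariate extension $\widehat Q$ of a query $Q$. There exists an optimal tree decomposition of $\widehat Q_\sigma$ (i.e., one whose width equals $\mathsf{w}(\widehat Q_\sigma)$) in which every bag is $Z$-prefix-closed.
   Context: A query is a full conjunctive query $Q = R_1(\mathbf X_1)\wedge\cdots\wedge R_k(\mathbf X_k)$. Multivariate extension: take fresh variables $Z_1,\dots,Z_k$; for a permutation $\sigma$ of $[k]$, the component $\widehat Q_\sigma$ replaces each atom $R_{\sigma_i}(\mathbf X_{\sigma_i})$ by $\widehat R_{\sigma_i}(Z_1,\dots,Z_i,\mathbf X_{\sigma_i})$. A set of variables $\mathbf Y$ of $\widehat Q_\sigma$ is $Z$-prefix-closed if for every $Z_i\in\mathbf Y$ we have $\{Z_1,\dots,Z_{i-1}\}\subseteq\mathbf Y$. Tree decomposition of a query $P$: a tree with bags of variables such that every atom schema is contained in some bag and the bags containing any variable form a connected subtree; its width is the maximum over bags $B$ of the fractional edge cover number of $P$ restricted to $B$ (each atom schema intersected with $B$); $\mathsf{w}(P)$ is the minimum width over all tree decompositions. *)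

(* Defs.v *)
From HB Require Import structures.
From mathcomp Require Import all_boot all_order all_algebra all_fingroup.
From mathcomp Require Import classical_sets reals.
Set Implicit Arguments. Unset Strict Implicit. Unset Printing Implicit Defensive.
Import Order.TTheory GRing.Theory Num.Theory.
Local Open Scope ring_scope.

(* A (full conjunctive) query / hypergraph over variables W with m atoms,
   given by the atom schemas H j : {set W}. *)

Definition qvars (W : finType) (m : nat) (H : 'I_m -> {set W}) : {set W} :=
  \bigcup_(j < m) H j.

Definition fec_feasible (R : realType) (W : finType) (m : nat)
  (H : 'I_m -> {set W}) (B : {set W}) (w : 'I_m -> R) : Prop :=
  (forall j, 0 <= w j) /\
  (forall v, v \in B -> 1 <= \sum_(j < m | v \in H j :&: B) w j).

Definition fec_number (R : realType) (W : finType) (m : nat)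
  (H : 'I_m -> {set W}) (B : {set W}) : R :=
  inf [set x : R | exists w : 'I_m -> R,
         fec_feasible H B w /\ x = \sum_(j < m) w j].

(* Tree on nodes 'I_n: n > 0, symmetric irreflexive edge relation,
   connected, with exactly n - 1 (undirected) edges. *)
Definition is_tree (n : nat) (e : rel 'I_n) : Prop :=
  (0 < n)%N /\ (forall a b, e a b = e b a) /\ (forall a, ~~ e a a) /\
  (forall a b, connect e a b) /\
  #|[set p : 'I_n * 'I_n | e p.1 p.2]| = (n.-1).*2.

Definition is_tree_decomp (W : finType) (m : nat) (H : 'I_m -> {set W})
  (n : nat) (e : rel 'I_n) (bag : 'I_n -> {set W}) : Prop :=
  is_tree e /\
  (forall u, bag u \subset qvars H) /\
  (forall j, exists u, H j \subset bag u) /\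
  (forall x u v, x \in bag u -> x \in bag v ->
     connect [rel a b | [&& e a b, x \in bag a & x \in bag b]] u v).

Definition td_width (R : realType) (W : finType) (m : nat)
  (H : 'I_m -> {set W}) (n : nat) (bag : 'I_n -> {set W}) : R :=
  \big[Num.max/0]_(u < n) fec_number R H (bag u).

Definition query_width (R : realType) (W : finType) (m : nat)
  (H : 'I_m -> {set W}) : R :=
  inf [set x : R | exists (n : nat) (e : rel 'I_n) (bag : 'I_n -> {set W}),
         is_tree_decomp H e bag /\ x = td_width R H bag].

(* Multivariate extension: variables are inl x (original) and inr i
   (Z_{i+1}, 0-indexed).  Component for permutation s: the atom at
   position i (0-indexed) has schema {Z_1..Z_{i+1}} u X_{s i}. *)
Definition mv_component (V : finType) (k : nat) (X : 'I_k -> {set V})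
  (s : 'S_k) : 'I_k -> {set (V + 'I_k)%type} :=
  fun i => [set inr j | j in [set j : 'I_k | (j <= i)%N]] :|:
           [set inl x | x in X (s i)].

Definition Z_prefix_closed (V : finType) (k : nat)
  (Y : {set (V + 'I_k)%type}) : Prop :=
  forall i j : 'I_k, inr i \in Y -> (j <= i)%N -> inr j \in Y.

(* Main.v *)
Require Import Defs.
From mathcomp Require Import all_boot all_order all_algebra all_fingroup.
From mathcomp Require Import classical_sets reals.
From mathcomp Require Import boolp zify.
Set Implicit Arguments. Unset Strict Implicit. Unset Printing Implicit Defensive.
Import Order.TTheory GRing.Theory Num.Theory.
Local Open Scope ring_scope.

Definition pclose (V : finType) (k : nat) (B : {set (V + 'I_k)%type}) :
  {set (V + 'I_k)%type} :=
  B :|: [set x : (V + 'I_k)%type | if x is inr j then [exists i : 'I_k, (inr i \in B) && (j <= i)%N]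
                 else false].

Lemma pclose_sub (V : finType) k (B : {set (V + 'I_k)%type}) : B \subset pclose B.
Proof. exact: finset.subsetUl. Qed.

Lemma pclose_inl (V : finType) k (B : {set (V + 'I_k)%type}) y :
  (inl y \in pclose B) = (inl y \in B).
Proof. by rewrite finset.in_setU inE orbF. Qed.

Lemma pclose_inr (V : finType) k (B : {set (V + 'I_k)%type}) j :
  (inr j \in pclose B) = [exists i : 'I_k, (inr i \in B) && (j <= i)%N].
Proof.
rewrite finset.in_setU inE; apply/orP/idP => [[jB|//]|->]; last by right.
by apply/existsP; exists j; rewrite jB leqnn.
Qed.

Lemma pclose_closed (V : finType) k (B : {set (V + 'I_k)%type}) : Z_prefix_closed (pclose B).
Proof.
move=> i j; rewrite !pclose_inr => /existsP[l /andP[lB il]] ji.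
by apply/existsP; exists l; rewrite lB (leq_trans ji il).
Qed.

Lemma mv_inr (V : finType) k (X : 'I_k -> {set V}) (s : 'S_k) i l :
  (inr i \in mv_component X s l) = (i <= l)%N.
Proof.
rewrite /mv_component finset.in_setU finset.mem_imset; last exact: inr_inj.
rewrite inE; case: (i <= l)%N => //=.
by apply/finset.imsetP => -[x _].
Qed.

Lemma mv_inl (V : finType) k (X : 'I_k -> {set V}) (s : 'S_k) y l :
  (inl y \in mv_component X s l) = (y \in X (s l)).
Proof.
rewrite /mv_component finset.in_setU finset.mem_imset; last exact: inl_inj.
by case: finset.imsetP => // -[x _].
Qed.

Lemma inf_sub (R : realType) (E1 E2 : set R) :
  (E1 `<=` E2)%classic -> nonempty E1 -> lbound E2 0 -> inf E2 <= inf E1.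
Proof.
move=> sub ne lb; apply: lb_le_inf => // x Ex.
apply: (ge_inf (ex_intro _ 0 lb)); exact: sub.
Qed.

Lemma inf_le_elt (R : realType) (E : set R) x : E x -> lbound E 0 -> inf E <= x.
Proof. by move=> Ex lb; apply: (ge_inf (ex_intro _ 0 lb)). Qed.

Lemma sum_pred_le (R : realType) m (P Q : pred 'I_m) (w : 'I_m -> R) :
  (forall j, 0 <= w j) -> (forall j, P j -> Q j) ->
  \sum_(j < m | P j) w j <= \sum_(j < m | Q j) w j.
Proof.
move=> w0 PQ; rewrite (big_mkcond P) (big_mkcond Q); apply: ler_sum => j _.
case: (boolP (P j)) => Pj; first by rewrite (PQ _ Pj).
by case: (Q j).
Qed.

Lemma fec_lb (R : realType) (W : finType) m (H : 'I_m -> {set W}) (B : {set W}) :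
  lbound [set x : R | exists w : 'I_m -> R,
         fec_feasible H B w /\ x = \sum_(j < m) w j] 0.
Proof.
move=> x [w [[w0 _] ->]]; exact: sumr_ge0.
Qed.

Lemma fec_ne (R : realType) (W : finType) m (H : 'I_m -> {set W}) (B : {set W}) :
  B \subset qvars H ->
  nonempty [set x : R | exists w : 'I_m -> R,
         fec_feasible H B w /\ x = \sum_(j < m) w j].
Proof.
move=> BH; exists (\sum_(j < m) (fun _ => (1 : R)) j); exists (fun _ => 1); split => //.
split=> [j|v vB]; first exact: ler01.
have /bigcupP[j _ vj] : v \in qvars H by apply: (fintype.subsetP BH).
rewrite (bigD1 j) /=; last by rewrite finset.in_setI vj vB.
by rewrite lerDl sumr_ge0.
Qed.

Lemma feas_pclose (R : realType) (V : finType) k (X : 'I_k -> {set V}) (s : 'S_k)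
  (B : {set (V + 'I_k)%type}) (w : 'I_k -> R) :
  fec_feasible (mv_component X s) B w -> fec_feasible (mv_component X s) (pclose B) w.
Proof.
move=> [w0 cov]; split => // v.
case: v => [y|j].
  rewrite pclose_inl => yB; apply: le_trans (cov _ yB) _.
  apply: sum_pred_le => // l; rewrite !finset.in_setI pclose_inl.
  by move=> /andP[-> ->].
rewrite pclose_inr => /existsP[i /andP[iB ji]].
apply: le_trans (cov _ iB) _; apply: sum_pred_le => // l.
rewrite !finset.in_setI !mv_inr => /andP[il _].
rewrite (leq_trans ji il) /= pclose_inr; apply/existsP; exists i.
by rewrite iB ji.
Qed.

Lemma fec_pclose (R : realType) (V : finType) k (X : 'I_k -> {set V}) (s : 'S_k) (B : {set (V + 'I_k)%type}) :
  B \subset qvars (mv_component X s) ->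
  fec_number R (mv_component X s) (pclose B) <= fec_number R (mv_component X s) B.
Proof.
move=> BH; apply: inf_sub; [|exact: fec_ne|exact: fec_lb].
by move=> x [w [fw ->]]; exists w; split => //; apply: feas_pclose.
Qed.

Lemma connect_mono (W : finType) n (e : rel 'I_n) (b1 b2 : 'I_n -> {set W}) x y u v :
  (forall a, x \in b1 a -> y \in b2 a) ->
  connect [rel a b | [&& e a b, x \in b1 a & x \in b1 b]] u v ->
  connect [rel a b | [&& e a b, y \in b2 a & y \in b2 b]] u v.
Proof.
move=> h; apply: connect_sub => a b /= /and3P[eab xa xb].
by apply: connect1; rewrite /= eab !h.
Qed.

Lemma td_pclose (V : finType) k (X : 'I_k -> {set V}) (s : 'S_k) n (e : rel 'I_n) bag :
  is_tree_decomp (mv_component X s) e bag ->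
  is_tree_decomp (mv_component X s) e (fun u => pclose (bag u)).
Proof.
move=> [tr [bq [cov con]]]; split => //; split.
  move=> u; apply/fintype.subsetP => -[y|j].
    by rewrite pclose_inl => /(fintype.subsetP (bq u)).
  by move=> _; apply/bigcupP; exists j => //; rewrite mv_inr.
split.
  move=> j; have [u hu] := cov j; exists u.
  exact: fintype.subset_trans hu (pclose_sub _).
move=> [y|j] u v.
  rewrite !pclose_inl => yu yv.
  by apply: connect_mono (con _ _ _ yu yv) => a; rewrite pclose_inl.
rewrite !pclose_inr => /existsP[i1 /andP[i1u ji1]] /existsP[i2 /andP[i2v ji2]].
have k0 : (0 < k)%N by have := ltn_ord j; lia.
have kp : (k.-1 < k)%N by lia.
have [r hr] := cov (Ordinal kp).
have inr_r i : inr i \in bag r.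
  apply: (fintype.subsetP hr); rewrite mv_inr /=; have := ltn_ord i; lia.
have [tr0 [esym _]] := tr.
have c1 := con _ _ _ i1u (inr_r i1).
have c2 := con _ _ _ i2v (inr_r i2).
have m1 := connect_mono (b2 := fun u => pclose (bag u)) (y := inr j) _ c1.
have m2 := connect_mono (b2 := fun u => pclose (bag u)) (y := inr j) _ c2.
apply: connect_trans (m1 _) _.
  by move=> a ia; rewrite pclose_inr; apply/existsP; exists i1; rewrite ia ji1.
rewrite sym_connect_sym; last first.
  by move=> a b /=; rewrite esym; case: (_ \in _); case: (_ \in _); rewrite ?andbF.
apply: m2.
by move=> a ia; rewrite pclose_inr; apply/existsP; exists i2; rewrite ia ji2.
Qed.

Lemma fin_min (R : realType) (F : seq R) : forall A : set R,
  (exists a, A a) -> (forall a, A a -> a \in F) ->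
  exists2 a, A a & forall b, A b -> a <= b.
Proof.
elim: F => [|x F IH] A [a Aa] AF; first by have := AF a Aa.
case: (pselect (exists b, A b /\ b != x)) => [[b [Ab bx]]|nob].
  have sub : forall y, (fun y => A y /\ y != x) y -> y \in F.
    by move=> y [Ay yx]; have := AF _ Ay; rewrite inE (negbTE yx).
  have [c [Ac cx] cmin] := IH (fun y => A y /\ y != x) (ex_intro _ b (conj Ab bx)) sub.
  case: (pselect (A x)) => Ax.
      case: (leP x c) => xc.
        exists x => // y Ay; case: (eqVneq y x) => [->//|yx].
        exact: le_trans xc (cmin _ (conj Ay yx)).
      exists c => // y Ay; case: (eqVneq y x) => [->|yx]; first exact: ltW.
      exact: cmin.
    exists c => // y Ay; apply: cmin; split => //.
    by apply/eqP => yx; apply: Ax; rewrite -yx.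
exists a => // y Ay.
have ax : a = x by apply/eqP; apply/negPn/negP => ax; apply: nob; exists a.
have yx : y = x by apply/eqP; apply/negPn/negP => yx; apply: nob; exists y.
by rewrite ax yx.
Qed.

Lemma td_width_ge0 (R : realType) (W : finType) m (H : 'I_m -> {set W}) n
  (bag : 'I_n -> {set W}) : 0 <= td_width R H bag.
Proof.
rewrite /td_width; elim/big_rec: _ => // i x _ Hx.
by rewrite le_max Hx orbT.
Qed.

Lemma td_width_in (R : realType) (W : finType) m (H : 'I_m -> {set W}) n
  (bag : 'I_n -> {set W}) :
  td_width R H bag \in 0 :: [seq fec_number R H B | B <- enum {set W}].
Proof.
rewrite /td_width; apply: (big_ind (fun x => x \in _)).
- by rewrite inE eqxx.
- move=> x y hx hy; rewrite /Num.max; by case: ifP.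
- move=> u _; rewrite inE; apply/orP; right; apply: map_f.
  by rewrite mem_enum.
Qed.

Lemma trivial_td (W : finType) m (H : 'I_m -> {set W}) :
  is_tree_decomp H (fun _ _ : 'I_1 => false) (fun _ => qvars H).
Proof.
split; last split; last split.
- split => //; split => //; split => //; split.
    by move=> a b; rewrite (ord1 a) (ord1 b) connect0.
  by apply: eq_card0 => p; rewrite inE.
- by move=> _; apply: fintype.subxx.
- move=> j; exists ord0; exact: (finset.bigcup_sup j).
- by move=> x a b _ _; rewrite (ord1 a) (ord1 b) connect0.
Qed.

Lemma opt_td (R : realType) (W : finType) m (H : 'I_m -> {set W}) :
  exists n (e : rel 'I_n) bag, is_tree_decomp H e bag /\
    td_width R H bag = query_width R H /\
    (forall n' (e' : rel 'I_n') bag', is_tree_decomp H e' bag' ->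
       td_width R H bag <= td_width R H bag').
Proof.
pose A : set R := fun x => exists (n : nat) (e : rel 'I_n) (bag : 'I_n -> {set W}),
         is_tree_decomp H e bag /\ x = td_width R H bag.
have -> : query_width R H = inf A by [].
have [a Aa amin] := @fin_min R (0 :: [seq fec_number R H B | B <- enum {set W}]) A
  (ex_intro _ _ (ex_intro _ 1%N (ex_intro _ _ (ex_intro _ _ (conj (trivial_td H) erefl)))))
  (fun a Aa => match Aa with ex_intro n (ex_intro e (ex_intro bag (conj _ E))) =>
     eq_ind_r (fun z => z \in _) (td_width_in R H bag) E end).
have [n [e [bag [td Ea]]]] := Aa; subst a.
exists n, e, bag; split => //; split.
  apply/eqP; rewrite eq_le; apply/andP; split.
    apply: lb_le_inf; first by exists (td_width R H bag).
    by move=> y Ay; apply: amin.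
  apply: inf_le_elt => //.
  by move=> y [n' [e' [bag' [_ ->]]]]; apply: td_width_ge0.
move=> n' e' bag' td'; apply: amin; by exists n', e', bag'.
Qed.

Theorem mainTheorem14 (R : realType) (V : finType) (k : nat)
  (X : 'I_k -> {set V}) (s : 'S_k) :
  exists (n : nat) (e : rel 'I_n) (bag : 'I_n -> {set (V + 'I_k)%type}),
    is_tree_decomp (mv_component X s) e bag /\
    td_width R (mv_component X s) bag = query_width R (mv_component X s) /\
    (forall u, Z_prefix_closed (bag u)).
Proof.
have [n [e [bag [td [wq wmin]]]]] := opt_td R (mv_component X s).
have td' := td_pclose td.
exists n, e, (fun u => pclose (bag u)); split => //; split; last first.
  by move=> u; apply: pclose_closed.
rewrite -wq; apply/eqP; rewrite eq_le (wmin _ _ _ td') andbT.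
rewrite /td_width; apply: le_bigmax2 => u _.
apply: fec_pclose; by case: td => _ [].
Qed.
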